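(* Let $n = 2k+1 > 3$ be an odd integer and $m = 3n-6 = 6k-3$. If an edge-coloring of a complete graph contains no rainbow $n$-cycle, then it contains no rainbow $m$-cycle.
   Context: A coloring is an arbitrary (not necessarily proper) assignment of colors, from an arbitrary set, to the edges of an undirected complete graph; the graph may be finite or infinite. A rainbow $n$-cycle is a cycle through $n$ distinct vertices whose $n$ edges all receive pairwise distinct colors. *)

(* Defs.v *)
From mathcomp Require Import all_boot.
Set Implicit Arguments. Unset Strict Implicit. Unset Printing Implicit Defensive.

(* An edge-colouring of the complete graph on vertex type V (finite or
   infinite) with colours in C: a function on pairs of vertices, symmetric,
   so that it really assigns one colour to each (unordered) edge {x,y},
   x <> y.  Values on the diagonal are irrelevant. *)
Definition edge_coloring (V C : Type) (c : V -> V -> C) : Prop :=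
  forall x y : V, c x y = c y x.

Definition rainbow_cycle (V C : Type) (c : V -> V -> C) (n : nat) : Prop :=
  3 <= n /\
  exists v : nat -> V,
    (forall i j, i < n -> j < n -> v i = v j -> i = j) /\
    (forall i j, i < n -> j < n ->
       c (v i) (v (i.+1 %% n)) = c (v j) (v (j.+1 %% n)) -> i = j).

(* Main.v *)
Require Import Defs.
From mathcomp Require Import all_boot.
From mathcomp Require Import zify.
From Stdlib Require Import Classical.

Set Implicit Arguments. Unset Strict Implicit. Unset Printing Implicit Defensive.

Ltac ifs := repeat match goal with |- context [if ?b then _ else _] => case: (boolP b) => ? end.

Section Main.
Variables (V C : Type) (c : V -> V -> C) (hc : edge_coloring c) (k : nat) (hk : 1 < k).
Hypothesis NR : ~ rainbow_cycle c (2*k+1).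

Definition E (w : nat -> V) t := c (w t) (w t.+1).
Definition PR (w : nat -> V) :=
  [/\ (forall i, w (i + (6*k-3)) = w i),
      (forall i j, i < 6*k-3 -> j < 6*k-3 -> w i = w j -> i = j) &
      (forall i j, i < 6*k-3 -> j < 6*k-3 -> E w i = E w j -> i = j)].

Lemma Lpos : 0 < 6*k-3. Proof. lia. Qed.

Lemma per_gen (T : Type) (f : nat -> T) (P : forall i, f (i + (6*k-3)) = f i) :
  forall q x, f (x + q * (6*k-3)) = f x.
Proof.
elim=> [|q IH] x; first by rewrite mul0n addn0.
by rewrite mulSn addnA IH P.
Qed.

Lemma pinj (T : Type) (f : nat -> T) (P : forall i, f (i + (6*k-3)) = f i)
  (I : forall i j, i < 6*k-3 -> j < 6*k-3 -> f i = f j -> i = j) :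
  forall x y, f x = f y -> x <= y -> y < x + (6*k-3) -> x = y.
Proof.
move=> x y fxy le lt.
have fm z : f z = f (z %% (6*k-3)).
  by rewrite {1}(divn_eq z (6*k-3)) addnC per_gen.
have hm : x %% (6*k-3) = y %% (6*k-3).
  by apply: I; rewrite ?ltn_pmod ?Lpos //; rewrite -!fm.
have : (6*k-3) %| y - x by rewrite -(eqn_mod_dvd _ le) hm.
case: (posnP (y - x)) => [h|h]; first lia.
move=> /(dvdn_leq h); lia.
Qed.

Lemma pinj2 (T : Type) (f : nat -> T) (P : forall i, f (i + (6*k-3)) = f i)
  (I : forall i j, i < 6*k-3 -> j < 6*k-3 -> f i = f j -> i = j) :
  forall x y, f x = f y -> x < y + (6*k-3) -> y < x + (6*k-3) -> x = y.
Proof.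
move=> x y fxy h1 h2; case: (leqP x y) => h.
- exact: pinj fxy h h2.
- by apply/esym; apply: (pinj P I) (esym fxy) (ltnW h) h1.
Qed.

Lemma Eper w : PR w -> forall i, E w (i + (6*k-3)) = E w i.
Proof. by case=> P _ _ i; rewrite /E -addSn !P. Qed.

Lemma winj w : PR w -> forall x y, w x = w y -> x < y + (6*k-3) -> y < x + (6*k-3) -> x = y.
Proof. by case=> P I _; apply: pinj2. Qed.

Lemma Einj w : PR w -> forall x y, E w x = E w y -> x < y + (6*k-3) -> y < x + (6*k-3) -> x = y.
Proof. move=> H; case: (H) => P I J; apply: pinj2 => //; exact: Eper. Qed.

Lemma wper w : PR w -> forall q x, w (x + q * (6*k-3)) = w x.
Proof. by case=> P _ _; apply: per_gen. Qed.
Lemma Eperq w : PR w -> forall q x, E w (x + q * (6*k-3)) = E w x.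
Proof. by move=> H; apply: per_gen; apply: Eper. Qed.


Definition col (w : nat -> V) (p : nat -> nat) i := c (w (p i)) (w (p (i.+1 %% (2*k+1)))).

Lemma colE w a b q : (a = q /\ b = q.+1) \/ (a = q.+1 /\ b = q) -> c (w a) (w b) = E w q.
Proof. by case=> -[-> ->] //; rewrite hc. Qed.

Lemma mk_rainbow w (p q : nat -> nat) (S : seq nat) :
  PR w ->
  (forall i, i < 2*k+1 -> p i < 6*k-3) ->
  (forall i j, i < 2*k+1 -> j < 2*k+1 -> p i = p j -> i = j) ->
  (forall i, i < 2*k+1 -> i \notin S -> q i < 6*k-3 /\
     ((p i = q i /\ p (i.+1 %% (2*k+1)) = (q i).+1) \/ (p i = (q i).+1 /\ p (i.+1 %% (2*k+1)) = q i))) ->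
  (forall i j, i < 2*k+1 -> j < 2*k+1 -> i \notin S -> j \notin S -> q i = q j -> i = j) ->
  (forall s i, s \in S -> i < 2*k+1 -> i \notin S -> col w p s <> E w (q i)) ->
  (forall s s', s \in S -> s' \in S -> s <> s' -> col w p s <> col w p s') ->
  False.
Proof.
move=> [P I J] Hp Hpi Hq Hqi HS HSS; apply: NR; split; first lia.
exists (fun i => w (p i)); split.
  by move=> i j hi hj /(I _ _ (Hp _ hi) (Hp _ hj)) /(Hpi _ _ hi hj).
move=> i j hi hj; rewrite -/(col w p i) -/(col w p j).
have cE x : x < 2*k+1 -> x \notin S -> col w p x = E w (q x).
  by move=> hx hS; rewrite /col; apply: colE; case: (Hq _ hx hS).
case: (boolP (i \in S)) => iS; case: (boolP (j \in S)) => jS.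
- by case: (eqVneq i j) => // ne /(HSS _ _ iS jS (elimN eqP ne)).
- by rewrite (cE j) // => /(HS _ _ iS hj jS).
- by rewrite (cE i) // => /esym /(HS _ _ jS hi iS).
- rewrite (cE i) // (cE j) // => /J.
  case: (Hq _ hi iS) => hqi _; case: (Hq _ hj jS) => hqj _.
  by move=> /(_ hqi hqj) /(Hqi _ _ hi hj iS jS).
Qed.


Lemma modS i : i < 2*k -> i.+1 %% (2*k+1) = i.+1.
Proof. by move=> h; rewrite modn_small //; lia. Qed.
Lemma modL : (2*k).+1 %% (2*k+1) = 0.
Proof. by rewrite addn1 modnn. Qed.

Ltac unf := repeat match goal with | x := _ |- _ => subst x end; cbv beta.
Ltac side_p := move=> i hi; unf; ifs; lia.
Ltac side_pi := move=> i j hi hj; unf; ifs; lia.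
Ltac side_q := move=> i hi; rewrite !inE => hS; unf; rewrite modS; [split; [ifs; lia| ifs; lia] | lia].
Ltac side_qi := move=> i j hi hj; rewrite !inE => hi2 hj2; unf; ifs; lia.

Lemma T1 w : PR w -> (forall t, t < 2*k -> c (w 0) (w (2*k)) <> E w t) -> False.
Proof.
move=> H Hc.
apply: (@mk_rainbow w (fun i => i) (fun i => i) [:: 2*k]).
- exact: H.
- side_p.
- side_pi.
- side_q.
- side_qi.
- move=> s i; rewrite !inE => /eqP -> hi hS.
  rewrite /col modL hc; apply: Hc; lia.
- by move=> s s'; rewrite !inE => /eqP -> /eqP ->.
Qed.


Lemma chord_eq (w : nat -> V) a b a0 b0 : (a = a0 /\ b = b0) \/ (a = b0 /\ b = a0) -> c (w a) (w b) = c (w a0) (w b0).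
Proof. by case=> -[-> ->] //; rewrite hc. Qed.

Ltac colc := rewrite /col ?modL ?modS; [unf; ifs; try (exfalso; lia); apply: chord_eq; lia | try lia ..].

Lemma C1t w : PR w ->
  (forall t, t = 0 \/ 2*k <= t <= 4*k-3 -> c (w 0) (w (2*k)) <> E w t) ->
  (forall t, t = 0 \/ 2*k <= t <= 4*k-3 -> c (w 1) (w (4*k-2)) <> E w t) ->
  c (w 0) (w (2*k)) <> c (w 1) (w (4*k-2)) -> False.
Proof.
move=> H Hx Hy Hxy.
pose p i := if i <= 1 then i else 4*k - i.
pose q i := if i <= 1 then i else 4*k-1-i.
have c1 : col w p 1 = c (w 1) (w (4*k-2)) by colc.
have c2 : col w p (2*k) = c (w 0) (w (2*k)) by colc.
apply: (@mk_rainbow w p q [:: 1; 2*k]).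
- exact: H.
- side_p.
- side_pi.
- side_q.
- side_qi.
- move=> s i; rewrite !inE => /orP[/eqP->|/eqP->] hi hS; rewrite ?c1 ?c2.
  + by apply: Hy; move: hS; rewrite /q; ifs; lia.
  + by apply: Hx; move: hS; rewrite /q; ifs; lia.
- move=> s s'; rewrite !inE => /orP[/eqP->|/eqP->] /orP[/eqP->|/eqP->] ne; rewrite ?c1 ?c2 //.
  by move/esym.
Qed.


Ltac chord_chord := move=> s s'; rewrite !inE => /or3P[|/eqP->|/eqP->|]; try (move=> /eqP->); move=> /or3P[|/eqP->|/eqP->|]; try (move=> /eqP->); move=> ne.

Lemma XRt w : PR w ->
  (forall t, t < k-1 \/ 2*k-1 <= t <= 3*k-2 -> c (w (k-1)) (w (3*k-1)) <> E w t) ->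
  (forall t, t < k-1 \/ 2*k-1 <= t <= 3*k-2 -> c (w 0) (w (2*k-1)) <> E w t) ->
  c (w (k-1)) (w (3*k-1)) <> c (w 0) (w (2*k-1)) -> False.
Proof.
move=> H Hx Hy Hxy.
pose p i := if i <= k-1 then i else 4*k-1-i.
pose q i := if i <= k-1 then i else 4*k-2-i.
have c1 : col w p (k-1) = c (w (k-1)) (w (3*k-1)) by colc.
have c2 : col w p (2*k) = c (w 0) (w (2*k-1)) by colc.
apply: (@mk_rainbow w p q [:: k-1; 2*k]).
- exact: H.
- side_p.
- side_pi.
- side_q.
- side_qi.
- move=> s i; rewrite !inE => /orP[/eqP->|/eqP->] hi hS; rewrite ?c1 ?c2.
  + by apply: Hx; move: hS; rewrite /q; ifs; lia.
  + by apply: Hy; move: hS; rewrite /q; ifs; lia.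
- move=> s s'; rewrite !inE => /orP[/eqP->|/eqP->] /orP[/eqP->|/eqP->] ne; rewrite ?c1 ?c2 //.
  by move/esym.
Qed.

Lemma Trit w : PR w ->
  (forall t, t < 2*k-1 -> c (w (2*k-1)) (w (4*k-2)) <> E w t) ->
  (forall t, t < 2*k-1 -> c (w (4*k-2)) (w 0) <> E w t) ->
  c (w (2*k-1)) (w (4*k-2)) <> c (w (4*k-2)) (w 0) -> False.
Proof.
move=> H Hx Hy Hxy.
pose p i := if i <= 2*k-1 then i else 4*k-2.
pose q (i : nat) := i.
have c1 : col w p (2*k-1) = c (w (2*k-1)) (w (4*k-2)) by colc.
have c2 : col w p (2*k) = c (w (4*k-2)) (w 0) by colc.
apply: (@mk_rainbow w p q [:: 2*k-1; 2*k]).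
- exact: H.
- side_p.
- side_pi.
- side_q.
- side_qi.
- move=> s i; rewrite !inE => /orP[/eqP->|/eqP->] hi hS; rewrite ?c1 ?c2.
  + by apply: Hx; move: hS; rewrite /q; ifs; lia.
  + by apply: Hy; move: hS; rewrite /q; ifs; lia.
- move=> s s'; rewrite !inE => /orP[/eqP->|/eqP->] /orP[/eqP->|/eqP->] ne; rewrite ?c1 ?c2 //.
  by move/esym.
Qed.

Lemma Dt w : PR w ->
  (forall t, t < k-1 \/ 3*k-1 <= t <= 4*k-3 -> c (w (k-1)) (w (3*k-1)) <> E w t) ->
  (forall t, t < k-1 \/ 3*k-1 <= t <= 4*k-3 -> c (w (2*k-1)) (w (4*k-2)) <> E w t) ->
  (forall t, t < k-1 \/ 3*k-1 <= t <= 4*k-3 -> c (w 0) (w (2*k-1)) <> E w t) ->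
  c (w (k-1)) (w (3*k-1)) <> c (w (2*k-1)) (w (4*k-2)) ->
  c (w (k-1)) (w (3*k-1)) <> c (w 0) (w (2*k-1)) ->
  c (w (2*k-1)) (w (4*k-2)) <> c (w 0) (w (2*k-1)) -> False.
Proof.
move=> H Hx Hy Hz Hxy Hxz Hyz.
pose p i := if i <= k-1 then i else if i <= 2*k-1 then i+2*k-1 else 2*k-1.
pose q i := if i <= k-1 then i else i+2*k-1.
have c1 : col w p (k-1) = c (w (k-1)) (w (3*k-1)) by colc.
have c2 : col w p (2*k-1) = c (w (2*k-1)) (w (4*k-2)) by colc.
have c3 : col w p (2*k) = c (w 0) (w (2*k-1)) by colc.
apply: (@mk_rainbow w p q [:: k-1; 2*k-1; 2*k]).
- exact: H.
- side_p.
- side_pi.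
- side_q.
- side_qi.
- move=> s i; rewrite !inE => /or3P[/eqP->|/eqP->|/eqP->] hi hS; rewrite ?c1 ?c2 ?c3.
  + by apply: Hx; move: hS; rewrite /q; ifs; lia.
  + by apply: Hy; move: hS; rewrite /q; ifs; lia.
  + by apply: Hz; move: hS; rewrite /q; ifs; lia.
- move=> s s'; rewrite !inE => /or3P[/eqP->|/eqP->|/eqP->] /or3P[/eqP->|/eqP->|/eqP->] ne;
    rewrite ?c1 ?c2 ?c3 //; by move/esym.
Qed.


Definition inR (w : nat -> V) x lo hi := exists t, lo <= t <= hi /\ x = E w t.

Lemma Eshift (w : nat -> V) s t : E (fun i => w (s + i)) t = E w (s + t).
Proof. by rewrite /E addnS. Qed.

Lemma PRshift w s : PR w -> PR (fun i => w (s + i)).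
Proof.
move=> H; case: (H) => P I J; split.
- by move=> i; rewrite addnA P.
- move=> i j hi hj /(winj H) h; have := h ltac:(lia) ltac:(lia); lia.
- move=> i j hi hj; rewrite !Eshift => /(Einj H) h; have := h ltac:(lia) ltac:(lia); lia.
Qed.

Lemma ceq w a b a0 b0 : PR w -> (a = a0 \/ a = a0 + (6*k-3)) -> (b = b0 \/ b = b0 + (6*k-3)) ->
  c (w a) (w b) = c (w a0) (w b0).
Proof. by case=> P _ _ [->|->] [->|->]; rewrite ?P. Qed.

Lemma ceqs w a b a0 b0 : PR w -> (a = a0 \/ a = a0 + (6*k-3)) -> (b = b0 \/ b = b0 + (6*k-3)) ->
  c (w b) (w a) = c (w a0) (w b0).
Proof. by move=> H ha hb; rewrite hc; apply: ceq. Qed.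

Lemma Eeq w a a0 : PR w -> (a = a0 \/ a = a0 + (6*k-3)) -> E w a = E w a0.
Proof. by move=> H [->|->]; rewrite ?(Eper H). Qed.

Ltac einj H h := let hh := fresh in move/(Einj H): h => hh; have := hh ltac:(lia) ltac:(lia); lia.

Lemma T1s w b : PR w -> exists t, b <= t < b + 2*k /\ c (w b) (w (b + 2*k)) = E w t.
Proof.
move=> H; apply: NNPP => Hn.
apply: (T1 (PRshift b H)) => t ht; rewrite Eshift addn0 => e.
by apply: Hn; exists (b + t); split; [lia|].
Qed.

Definition X (w : nat -> V) a := c (w a) (w (a + 2*k)).

Lemma C1s w b : PR w -> X w b = E w b \/ X w (b + (4*k-2)) = E w b.
Proof.
move=> H; apply: NNPP => /not_or_and [n1 n2].
have [t1 [ht1 e1]] := T1s b H.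
have [t2 [ht2 e2]] := T1s (b + (4*k-2)) H.
have nt1 : t1 <> b by move=> et; apply: n1; rewrite /X e1 et.
have nt2 : t2 <> b + (6*k-3).
  by move=> et; apply: n2; rewrite /X e2 et (Eper H).
have eY : c (w (b + 1)) (w (b + (4*k-2))) = E w t2.
  rewrite -e2 hc; apply/esym; apply: ceq => //; lia.
apply: (C1t (PRshift b H)); rewrite /= ?addn0.
- move=> t ht; rewrite Eshift e1 => h; einj H h.
- move=> t ht; rewrite Eshift eY => h.
  case: ht => [et|ht].
  + subst t; move: h; rewrite addn0 -(Eper H b) => h; einj H h.
  + einj H h.
- rewrite e1 eY => h; einj H h.
Qed.


Lemma Xeq w a a0 : PR w -> a = a0 + (6*k-3) -> X w a = X w a0.
Proof. move=> H ->; rewrite /X; apply: ceq => //; lia. Qed.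

Lemma orbit w : PR w ->
  (X w (k-1) = E w (k-1) /\ X w (3*k-2) = E w (3*k-2) /\ X w (5*k-3) = E w (5*k-3)) \/
  (X w (k-1) = E w (3*k-2) /\ X w (3*k-2) = E w (5*k-3) /\ X w (5*k-3) = E w (k-1)).
Proof.
move=> H.
have c0 := C1s (k-1) H; have c1 := C1s (3*k-2) H; have c2 := C1s (5*k-3) H.
rewrite (_ : k-1 + (4*k-2) = 5*k-3) in c0; last by lia.
rewrite (@Xeq w (3*k-2 + (4*k-2)) (k-1) H) in c1; last by lia.
rewrite (@Xeq w (5*k-3 + (4*k-2)) (3*k-2) H) in c2; last by lia.
have d01 : E w (k-1) <> E w (3*k-2) by move=> h; einj H h.
have d12 : E w (3*k-2) <> E w (5*k-3) by move=> h; einj H h.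
have d02 : E w (k-1) <> E w (5*k-3) by move=> h; einj H h.
case: (classic (X w (k-1) = E w (k-1))) => h0.
- left; split => //.
  have h1 : X w (3*k-2) = E w (3*k-2) by case: c1 => // e; case: d01; rewrite -h0 e.
  split => //; case: c2 => // e; case: d12; by rewrite -h1 e.
- right.
  have h2 : X w (5*k-3) = E w (k-1) by case: c0.
  have h1 : X w (3*k-2) = E w (5*k-3) by case: c2 => // e; case: d02; rewrite -h2 e.
  split; last by split.
  by case: c1 => // e; case: d12; rewrite -h1 e.
Qed.


Lemma inR_le w x a b a' b' : inR w x a b -> a' <= a -> b <= b' -> inR w x a' b'.
Proof. by case=> t [ht e] h1 h2; exists t; split => //; lia. Qed.

Lemma inR_dis w x a b a' b' : PR w -> inR w x a b -> inR w x a' b' ->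
  (b < a' /\ b' < a + (6*k-3)) \/ (b' < a /\ b < a' + (6*k-3)) -> False.
Proof.
move=> H [t [ht e]] [t' [ht' e']] hd.
have h : E w t = E w t' by rewrite -e -e'.
einj H h.
Qed.

Lemma inR_sh w s x y lo hi : PR w -> inR w x (s+lo) (s+hi) -> y = x ->
  inR (fun i => w (s+i)) y lo hi.
Proof.
move=> H [t [ht e]] ->; exists (t - s); split; first lia.
by rewrite Eshift e (_ : s + (t - s) = t) //; lia.
Qed.

Lemma inR_sh' w s x y lo hi : PR w -> inR (fun i => w (s+i)) y lo hi -> y = x ->
  inR w x (s+lo) (s+hi).
Proof.
move=> H [t [ht e]] <-; exists (s + t); split; first lia.
by rewrite e Eshift.
Qed.

Lemma inR_per w x a b a' b' : PR w -> inR w x a b -> a' + (6*k-3) <= a -> b <= b' + (6*k-3) ->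
  inR w x a' b'.
Proof.
move=> H [t [ht e]] h1 h2; exists (t - (6*k-3)); split; first lia.
by rewrite e; apply: Eeq => //; lia.
Qed.

Lemma XRs w j : PR w -> X w (j + (k-1)) = E w (j + (k-1)) ->
  inR w (c (w j) (w (j + (2*k-1)))) j (j + (k-1)) \/
  inR w (c (w j) (w (j + (2*k-1)))) (j + (2*k-1)) (j + (3*k-2)).
Proof.
move=> H hF; apply: NNPP => /not_or_and [n1 n2].
have eX : c (w (j + (k-1))) (w (j + (3*k-1))) = E w (j + (k-1)).
  by rewrite -hF /X; apply: ceq => //; lia.
apply: (XRt (PRshift j H)); rewrite /= ?addn0.
- move=> t ht; rewrite Eshift eX => h; einj H h.
- move=> t ht; rewrite Eshift => h.
  case: ht => ht; [apply: n1 | apply: n2]; exists (j + t); split => //; lia.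
- rewrite eX => h; apply: n1; exists (j + (k-1)); split; [lia | by rewrite h].
Qed.

Definition r0 (w : nat -> V) := c (w 0) (w (2*k-1)).
Definition rm (w : nat -> V) := c (w (2*k-1)) (w (4*k-2)).

Lemma Tris w : PR w ->
  inR w (r0 w) (4*k-2) (6*k-4) \/ inR w (rm w) (4*k-2) (6*k-4) \/ r0 w = rm w.
Proof.
move=> H; apply: NNPP => /not_or_and [n1 /not_or_and [n2 n3]].
have e0 : c (w (4*k-2 + (2*k-1))) (w (4*k-2 + (4*k-2))) = r0 w by apply: ceq => //; lia.
have em : c (w (4*k-2 + (4*k-2))) (w (4*k-2)) = rm w by apply: ceq => //; lia.
have em' : c (w (4*k-2 + (4*k-2))) (w (4*k-2 + 0)) = rm w by rewrite addn0.
apply: (Trit (PRshift (4*k-2) H)); rewrite /=.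
- move=> t ht; rewrite Eshift e0 => h; apply: n1; exists (4*k-2+t); split => //; lia.
- move=> t ht; rewrite Eshift em' => h; apply: n2; exists (4*k-2+t); split => //; lia.
- by rewrite e0 em'.
Qed.

Lemma Ds w : PR w -> X w (k-1) = E w (k-1) ->
  inR w (r0 w) 0 (k-1) \/ inR w (r0 w) (3*k-1) (4*k-3) \/
  inR w (rm w) 0 (k-1) \/ inR w (rm w) (3*k-1) (4*k-3) \/ r0 w = rm w.
Proof.
move=> H hF; apply: NNPP => /not_or_and [n1 /not_or_and [n2 /not_or_and [n3 /not_or_and [n4 n5]]]].
have eX : c (w (k-1)) (w (3*k-1)) = E w (k-1).
  by rewrite -hF /X; apply: ceq => //; lia.
apply: (Dt H); rewrite ?eX -/(r0 w) -/(rm w).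
- move=> t ht h; einj H h.
- move=> t ht h; case: ht => ht; [apply: n3 | apply: n4]; exists t; split => //; lia.
- move=> t ht h; case: ht => ht; [apply: n1 | apply: n2]; exists t; split => //; lia.
- move=> h; apply: n3; exists (k-1); split; [lia | by rewrite h].
- move=> h; apply: n1; exists (k-1); split; [lia | by rewrite h].
- by move/esym.
Qed.


Ltac dis H a b := exfalso; apply: (inR_dis H a b); lia.

Lemma alt w : PR w -> X w (k-1) = E w (k-1) -> X w (3*k-2) = E w (3*k-2) ->
  (inR w (r0 w) 0 (k-1) -> inR w (rm w) (4*k-2) (5*k-3)) /\
  (inR w (r0 w) (2*k-1) (3*k-2) -> inR w (rm w) (2*k-1) (3*k-2)) /\
  (inR w (r0 w) 0 (k-1) \/ inR w (r0 w) (2*k-1) (3*k-2)).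
Proof.
move=> H h0 h1.
have x0 : inR w (r0 w) 0 (k-1) \/ inR w (r0 w) (2*k-1) (3*k-2).
  have := @XRs w 0 H; rewrite !add0n => /(_ h0); exact.
have xm : inR w (rm w) (2*k-1) (3*k-2) \/ inR w (rm w) (4*k-2) (5*k-3).
  have := @XRs w (2*k-1) H.
  rewrite (_ : 2*k-1 + (k-1) = 3*k-2); last by lia.
  rewrite (_ : 2*k-1 + (2*k-1) = 4*k-2); last by lia.
  rewrite (_ : 2*k-1 + (3*k-2) = 5*k-3); last by lia.
  move=> /(_ h1); exact.
have tr := Tris H; have dd := Ds H h0.
split; [|split] => //.
- move=> o0.
  case: tr => [a|[a|e]].
  + dis H o0 a.
  + case: xm => // b; dis H a b.
  + rewrite e in o0; case: xm => b; dis H o0 b.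
- move=> n0.
  case: dd => [a|[a|[a|[a|e]]]].
  + dis H n0 a.
  + dis H n0 a.
  + case: xm => b; dis H a b.
  + case: xm => b; dis H a b.
  + by rewrite -e.
Qed.


Lemma Fsh w s a : X w (s + a) = E w (s + a) -> X (fun i => w (s + i)) a = E (fun i => w (s + i)) a.
Proof. by rewrite /X Eshift /= addnA. Qed.

Lemma Fcase w : PR w -> X w (k-1) = E w (k-1) -> X w (3*k-2) = E w (3*k-2) ->
  X w (5*k-3) = E w (5*k-3) -> False.
Proof.
move=> H h0 h1 h2.
pose w1 := fun i => w (2*k-1 + i).
pose w2 := fun i => w (4*k-2 + i).
have H1 : PR w1 := PRshift (2*k-1) H.
have H2 : PR w2 := PRshift (4*k-2) H.
have f10 : X w1 (k-1) = E w1 (k-1).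
  by apply: Fsh; rewrite (_ : 2*k-1 + (k-1) = 3*k-2) //; lia.
have f11 : X w1 (3*k-2) = E w1 (3*k-2).
  by apply: Fsh; rewrite (_ : 2*k-1 + (3*k-2) = 5*k-3) //; lia.
have f20 : X w2 (k-1) = E w2 (k-1).
  by apply: Fsh; rewrite (_ : 4*k-2 + (k-1) = 5*k-3) //; lia.
have f21 : X w2 (3*k-2) = E w2 (3*k-2).
  apply: Fsh; rewrite (@Xeq w (4*k-2 + (3*k-2)) (k-1) H); last by lia.
  by rewrite h0; apply/esym; apply: Eeq => //; lia.
pose r2 := c (w (4*k-2)) (w 0).
have e1a : r0 w1 = rm w by rewrite /r0 /rm /w1 /w2 /r2 /=; apply: ceq => //; lia.
have e1b : rm w1 = r2 by rewrite /r0 /rm /w1 /w2 /r2 /=; apply: ceq => //; lia.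
have e2a : r0 w2 = r2 by rewrite /r0 /rm /w1 /w2 /r2 /=; apply: ceq => //; lia.
have e2b : rm w2 = r0 w by rewrite /r0 /rm /w1 /w2 /r2 /=; apply: ceq => //; lia.
have [a0 [a1 a2]] := alt H h0 h1.
have [b0 [b1 _]] := alt H1 f10 f11.
have [d0 [d1 _]] := alt H2 f20 f21.
have s1 : inR w (rm w) (2*k-1) (3*k-2) -> inR w r2 (6*k-3) (7*k-4).
  move=> o; have o' : inR w1 (r0 w1) 0 (k-1).
    by apply: (inR_sh H (x := rm w)); [apply: (inR_le o); lia | exact: e1a].
  have o2 := inR_sh' H (b0 o') e1b; apply: (inR_le o2); lia.
have s2 : inR w (rm w) (4*k-2) (5*k-3) -> inR w r2 (4*k-2) (5*k-3).
  move=> o; have o' : inR w1 (r0 w1) (2*k-1) (3*k-2).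
    by apply: (inR_sh H (x := rm w)); [apply: (inR_le o); lia | exact: e1a].
  have o2 := inR_sh' H (b1 o') e1b; apply: (inR_le o2); lia.
have s3 : inR w r2 (4*k-2) (5*k-3) -> inR w (r0 w) (2*k-1) (3*k-2).
  move=> o; have o' : inR w2 (r0 w2) 0 (k-1).
    by apply: (inR_sh H (x := r2)); [apply: (inR_le o); lia | exact: e2a].
  have := inR_sh' H (d0 o') e2b => o2; apply: (inR_per H o2); lia.
have s4 : inR w r2 (6*k-3) (7*k-4) -> inR w (r0 w) 0 (k-1).
  move=> o; have o' : inR w2 (r0 w2) (2*k-1) (3*k-2).
    by apply: (inR_sh H (x := r2)); [apply: (inR_le o); lia | exact: e2a].
  have := inR_sh' H (d1 o') e2b => o2; apply: (inR_per H o2); lia.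
case: a2 => o.
- have o2 := s3 (s2 (a0 o)); apply: (inR_dis H o o2); lia.
- have o2 := s4 (s1 (a1 o)); apply: (inR_dis H o o2); lia.
Qed.


Definition refl (w : nat -> V) := fun i => w ((6*k-3) - i %% (6*k-3)).

Lemma refl_val w i : i < 6*k-3 -> refl w i = w ((6*k-3) - i).
Proof. by move=> h; rewrite /refl modn_small. Qed.

Lemma Erefl w i : PR w -> i < 6*k-3 -> E (refl w) i = E w (6*k-3-1-i).
Proof.
move=> H hi; rewrite /E refl_val //.
case: (ltnP i.+1 (6*k-3)) => h.
- rewrite refl_val // hc; congr (c (w _) (w _)); lia.
- have -> : i.+1 = 0 + (6*k-3) by lia.
  rewrite /refl modnDr mod0n subn0.
  case: H => P _ _; rewrite -{2}(add0n (6*k-3)) P hc.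
  congr (c (w _) (w _)); lia.
Qed.

Lemma PRrefl w : PR w -> PR (refl w).
Proof.
move=> H; split.
- by move=> i; rewrite /refl modnDr.
- move=> i j hi hj; rewrite !refl_val // => /(winj H) h; have := h ltac:(lia) ltac:(lia); lia.
- move=> i j hi hj; rewrite !Erefl // => /(Einj H) h; have := h ltac:(lia) ltac:(lia); lia.
Qed.

Lemma Bcase w : PR w -> X w (k-1) = E w (3*k-2) -> X w (3*k-2) = E w (5*k-3) ->
  X w (5*k-3) = E w (k-1) -> False.
Proof.
move=> H h0 h1 h2.
have H' := PRrefl H.
apply: (Fcase H').
- rewrite Erefl //; last by lia.
  rewrite /X !refl_val; try lia.
  rewrite (_ : 6*k-3-1-(k-1) = 5*k-3); last by lia.
  rewrite -h1 /X hc; congr (c (w _) (w _)); lia.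
- rewrite Erefl //; last by lia.
  rewrite /X !refl_val; try lia.
  rewrite (_ : 6*k-3-1-(3*k-2) = 3*k-2); last by lia.
  rewrite -h0 /X hc; congr (c (w _) (w _)); lia.
- rewrite Erefl //; last by lia.
  rewrite (_ : 6*k-3-1-(5*k-3) = k-1); last by lia.
  rewrite -h2 /X.
  case: (H') => P' _ _.
  rewrite (_ : 5*k-3 + 2*k = k + (6*k-3)); last by lia.
  rewrite P' !refl_val; try lia.
  case: H => P _ _.
  rewrite P hc; congr (c (w _) (w _)); lia.
Qed.

End Main.

Theorem lemma12 (k : nat) (hk : 3 < 2 * k + 1)
    (V C : Type) (c : V -> V -> C) (hc : edge_coloring c) :
  ~ rainbow_cycle c (2 * k + 1) -> ~ rainbow_cycle c (3 * (2 * k + 1) - 6).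
Proof.
move=> NR [h3 [v [vi vc]]].
have k2 : 1 < k by lia.
have eL : 3 * (2 * k + 1) - 6 = 6*k-3 by lia.
rewrite eL in vi vc.
pose w i := v (i %% (6*k-3)).
have H : PR c k w.
  split.
  - by move=> i; rewrite /w modnDr.
  - by move=> i j hi hj; rewrite /w !modn_small //; apply: vi.
  - by move=> i j hi hj; rewrite /E /w !(modn_small hi) !(modn_small hj); apply: vc.
case: (orbit hc k2 NR H) => [[h0 [h1 h2]]|[h0 [h1 h2]]].
- exact: (Fcase hc k2 NR H h0 h1 h2).
- exact: (Bcase hc k2 NR H h0 h1 h2).
Qed.
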